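(* Let $0<\delta<1$ and let $(f_n)_{n\ge1}$ be a sequence of Möbius transformations such that $f_n(\mathbb{D})\subset\mathbb{D}$ and $\operatorname{rad}(f_n(\mathbb{D}))<\delta$ for all $n$. Then $F_n=f_1\cdots f_n$ is a rapid-escape sequence.
   Context: $\mathbb{D}$ is the open unit disc; $\operatorname{rad}(D)$ is the Euclidean radius of a Euclidean disc $D$. $\mathbb{H}^3=\{(x,y,t)\in\mathbb{R}^3:t>0\}$ with the hyperbolic metric $\rho$ induced by the density $ds/t$; $\mathbb{C}$ is identified with the plane $t=0$, so $\overline{\mathbb{C}}$ is the ideal boundary, and Möbius transformations act on $\mathbb{H}^3$ by their Poincaré extensions (as hyperbolic isometries). Let $j=(0,0,1)$. A sequence of Möbius transformations $(F_n)$ is escaping if $\rho(j,F_n(j))\to\infty$, and is a rapid-escape sequence if it is escaping and $\sum_n\exp(-\rho(j,F_n(j)))<+\infty$. *)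

(* Defs.v *)
From Stdlib Require Import Reals.
Open Scope R_scope.

Record C := mkC { re : R; im : R }.
Definition Cadd (z w : C) : C := mkC (re z + re w) (im z + im w).
Definition Csub (z w : C) : C := mkC (re z - re w) (im z - im w).
Definition Cmul (z w : C) : C :=
  mkC (re z * re w - im z * im w) (re z * im w + im z * re w).
Definition Cconj (z : C) : C := mkC (re z) (- im z).
Definition Cscale (r : R) (z : C) : C := mkC (r * re z) (r * im z).
Definition C0 : C := mkC 0 0.
Definition Cnorm2 (z : C) : R := re z * re z + im z * im z.
Definition Cabs (z : C) : R := sqrt (Cnorm2 z).

(** A Möbius transformation z |-> (a z + b)/(c z + d), with ad - bc <> 0. *)
Record Mobius := mkMobius {
  ma : C; mb : C; mc : C; md : C;
  mdet_nz : Csub (Cmul ma md) (Cmul mb mc) <> C0 }.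

Definition mdet (f : Mobius) : C := Csub (Cmul (ma f) (md f)) (Cmul (mb f) (mc f)).

(** Action on the finite plane, at points z with c z + d <> 0:
    f(z) = (a z + b) * conj(c z + d) / |c z + d|^2. *)
Definition mob_den (f : Mobius) (z : C) : C := Cadd (Cmul (mc f) z) (md f).
Definition mob_apply (f : Mobius) (z : C) : C :=
  Cscale (/ Cnorm2 (mob_den f z))
    (Cmul (Cadd (Cmul (ma f) z) (mb f)) (Cconj (mob_den f z))).

Definition in_disc (z : C) : Prop := Cabs z < 1.

(** f(D) ⊂ D  (in particular f has no pole in D, so f(D) ⊂ C). *)
Definition maps_disc_into_disc (f : Mobius) : Prop :=
  forall z, in_disc z -> mob_den f z <> C0 /\ in_disc (mob_apply f z).

Definition image_disc_is (f : Mobius) (w : C) (r : R) : Prop :=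
  0 < r /\
  forall y, (exists z, in_disc z /\ mob_den f z <> C0 /\ y = mob_apply f z)
            <-> Cabs (Csub y w) < r.

Definition image_disc_radius_lt (f : Mobius) (delta : R) : Prop :=
  exists w r, image_disc_is f w r /\ r < delta.

(** Upper half-space H^3 : points (z, t) with z in C, t > 0. *)
Record H3pt := mkH3 { hz : C; ht : R }.

Definition j_pt : H3pt := mkH3 C0 1.

(** Poincaré extension of a Möbius map (standard explicit formula):
    f(z + t j) = ( ((a z + b) conj(c z + d) + a conj(c) t^2) / N ,
                   |ad - bc| t / N ),   N = |c z + d|^2 + |c|^2 t^2. *)
Definition poincare_ext (f : Mobius) (p : H3pt) : H3pt :=
  let z := hz p in let t := ht p in
  let N := Cnorm2 (mob_den f z) + Cnorm2 (mc f) * (t * t) in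
  mkH3
    (Cscale (/ N)
       (Cadd (Cmul (Cadd (Cmul (ma f) z) (mb f)) (Cconj (mob_den f z)))
             (Cscale (t * t) (Cmul (ma f) (Cconj (mc f))))))
    (Cabs (mdet f) * t / N).

(** Hyperbolic distance for the metric ds/t on H^3:
    cosh rho(p,q) = 1 + |p - q|^2 / (2 t_p t_q), rho = arcosh(...). *)
Definition arcosh (x : R) : R := ln (x + sqrt (x * x - 1)).
Definition hdist (p q : H3pt) : R :=
  arcosh (1 + (Cnorm2 (Csub (hz p) (hz q)) + (ht p - ht q) * (ht p - ht q))
              / (2 * ht p * ht q)).

Fixpoint comp_act (f : nat -> Mobius) (n : nat) (p : H3pt) : H3pt :=
  match n with
  | O => p
  | S m => comp_act f m (poincare_ext (f (S m)) p)
  end.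

(** Escaping / rapid-escape for a sequence of Möbius maps given through their
    action on H^3, indexed by n >= 1 (G n = F_{n+1}). *)
Definition escaping (G : nat -> H3pt -> H3pt) : Prop :=
  forall M : R, exists N : nat, forall n, (N <= n)%nat -> M < hdist j_pt (G n j_pt).

Definition rapid_escape (G : nat -> H3pt -> H3pt) : Prop :=
  escaping G /\
  exists l : R, infinite_sum (fun n => exp (- hdist j_pt (G n j_pt))) l.

(* Main.v *)
From Pilot Require Import Defs.
From Stdlib Require Import Reals Lra Psatz.
Import Pilot.Defs.
Open Scope R_scope.

Definition Zq (a b c d z : C) (t : R) : C :=
  Cadd (Cmul (Cadd (Cmul a z) b) (Cconj (Cadd (Cmul c z) d)))
       (Cscale (t * t) (Cmul a (Cconj c))).
Definition Nq (c d z : C) (t : R) : R := Cnorm2 (Cadd (Cmul c z) d) + Cnorm2 c * (t * t).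
Definition detq (a b c d : C) : C := Csub (Cmul a d) (Cmul b c).
Definition Pq (a b c d : C) (p : H3pt) : H3pt :=
  mkH3 (Cscale (/ Nq c d (hz p) (ht p)) (Zq a b c d (hz p) (ht p)))
       (Cabs (detq a b c d) * ht p / Nq c d (hz p) (ht p)).

Lemma poincare_Pq f p : poincare_ext f p = Pq (ma f) (mb f) (mc f) (md f) p.
Proof. reflexivity. Qed.

Ltac cdes := repeat match goal with x : C |- _ => destruct x end;
  unfold Zq, Nq, detq, Cnorm2, Cadd, Cmul, Cscale, Cconj, Csub in *; simpl in *.

Lemma I1 (a b c d a' b' c' d' z : C) (t : R) :
  Cnorm2 (Cadd (Cmul c (Zq a' b' c' d' z t)) (Cscale (Nq c' d' z t) d)) + Cnorm2 c * (Cnorm2 (detq a' b' c' d') * (t*t))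
  = Nq c' d' z t * Nq (Cadd (Cmul c a') (Cmul d c')) (Cadd (Cmul c b') (Cmul d d')) z t.
Proof. cdes. ring. Qed.

Lemma I2 (a b c d a' b' c' d' z : C) (t : R) :
  Cadd (Cmul (Cadd (Cmul a (Zq a' b' c' d' z t)) (Cscale (Nq c' d' z t) b)) (Cconj (Cadd (Cmul c (Zq a' b' c' d' z t)) (Cscale (Nq c' d' z t) d))))
       (Cscale (Cnorm2 (detq a' b' c' d') * (t*t)) (Cmul a (Cconj c)))
  = Cscale (Nq c' d' z t) (Zq (Cadd (Cmul a a') (Cmul b c')) (Cadd (Cmul a b') (Cmul b d'))
                  (Cadd (Cmul c a') (Cmul d c')) (Cadd (Cmul c b') (Cmul d d')) z t).
Proof. cdes. f_equal; ring. Qed.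

Lemma S1 (c d Z : C) (s tau : R) : s <> 0 ->
  Nq c d (Cscale (/s) Z) tau =
  (Cnorm2 (Cadd (Cmul c Z) (Cscale s d)) + Cnorm2 c * (tau*tau*(s*s))) / (s*s).
Proof. intros. cdes. field. auto. Qed.

Lemma S2 (a b c d Z : C) (s tau : R) : s <> 0 ->
  Zq a b c d (Cscale (/s) Z) tau =
  Cscale (/(s*s)) (Cadd (Cmul (Cadd (Cmul a Z) (Cscale s b)) (Cconj (Cadd (Cmul c Z) (Cscale s d))))
       (Cscale (tau*tau*(s*s)) (Cmul a (Cconj c)))).
Proof. intros. cdes. f_equal; field; auto. Qed.

Lemma Cnorm2_ge0 z : 0 <= Cnorm2 z.
Proof. cdes. nra. Qed.

Lemma Cnorm2_mul z w : Cnorm2 (Cmul z w) = Cnorm2 z * Cnorm2 w.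
Proof. cdes. ring. Qed.

Lemma Cabs_mul z w : Cabs (Cmul z w) = Cabs z * Cabs w.
Proof. unfold Cabs. rewrite Cnorm2_mul. apply sqrt_mult; apply Cnorm2_ge0. Qed.

Lemma detq_mul a b c d a' b' c' d' :
  detq (Cadd (Cmul a a') (Cmul b c')) (Cadd (Cmul a b') (Cmul b d'))
       (Cadd (Cmul c a') (Cmul d c')) (Cadd (Cmul c b') (Cmul d d'))
  = Cmul (detq a b c d) (detq a' b' c' d').
Proof. cdes. f_equal; ring. Qed.

Lemma Cscale_cancel X s W : s <> 0 -> X <> 0 ->
  Cscale (/ (s * X / (s*s))) (Cscale (/ (s*s)) (Cscale s W)) = Cscale (/ X) W.
Proof. intros. destruct W. unfold Cscale; simpl. f_equal; field; auto. Qed.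

Lemma Pq_comp a b c d a' b' c' d' p :
  0 < Nq c' d' (hz p) (ht p) ->
  0 < Nq (Cadd (Cmul c a') (Cmul d c')) (Cadd (Cmul c b') (Cmul d d')) (hz p) (ht p) ->
  Pq a b c d (Pq a' b' c' d' p) =
  Pq (Cadd (Cmul a a') (Cmul b c')) (Cadd (Cmul a b') (Cmul b d'))
     (Cadd (Cmul c a') (Cmul d c')) (Cadd (Cmul c b') (Cmul d d')) p.
Proof.
  destruct p as [z t]. simpl. intros Hb Hab.
  set (Nb := Nq c' d' z t) in *.
  set (Nab := Nq (Cadd (Cmul c a') (Cmul d c')) (Cadd (Cmul c b') (Cmul d d')) z t) in *.
  unfold Pq at 1. simpl.
  assert (Hs : Nb <> 0) by lra.
  set (tau := Cabs (detq a' b' c' d') * t / Nb).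
  assert (Htau : tau * tau * (Nb * Nb) = Cnorm2 (detq a' b' c' d') * (t*t)).
  { unfold tau, Cabs. replace (sqrt (Cnorm2 (detq a' b' c' d')) * t / Nb * (sqrt (Cnorm2 (detq a' b' c' d')) * t / Nb) * (Nb * Nb))
     with (sqrt (Cnorm2 (detq a' b' c' d')) * sqrt (Cnorm2 (detq a' b' c' d')) * (t*t)) by (field; auto).
    rewrite sqrt_sqrt; [ring| apply Cnorm2_ge0]. }
  rewrite (S1 _ _ _ _ _ Hs), (S2 _ _ _ _ _ _ _ Hs). fold Nb. fold tau. rewrite Htau.
  fold Nb. rewrite (I1 a b c d), I2. fold Nab.
  unfold Pq; simpl. fold Nb Nab.
  rewrite detq_mul, Cabs_mul.
  assert (Hab' : Nab <> 0) by lra.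
  f_equal.
  - apply Cscale_cancel; auto.
  - unfold tau. field. auto.
Qed.


Lemma sqnn x : 0 <= x * x.
Proof. nra. Qed.

Lemma sq_pos x : x <> 0 -> 0 < x * x.
Proof. intro H. exact (Rsqr_pos_lt x H). Qed.

Lemma Nq_pos' a b c d z t : 0 < Cnorm2 (detq a b c d) -> 0 < t -> 0 < Nq c d z t.
Proof.
  intros Hd Ht. destruct a as [a1 a2], b as [b1 b2], c as [c1 c2], d as [d1 d2], z as [z1 z2].
  unfold Nq, detq, Cnorm2, Cadd, Cmul, Csub in *; simpl in *.
  destruct (Req_dec c1 0); destruct (Req_dec c2 0).
  - subst. assert (d1 <> 0 \/ d2 <> 0).
    { destruct (Req_dec d1 0), (Req_dec d2 0); auto. subst. nra. }
    destruct H as [H|H].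
    + assert (0 < d1 * d1) by (apply sq_pos; auto). nra.
    + assert (0 < d2 * d2) by (apply sq_pos; auto). nra.
  - assert (0 < c2 * c2) by (apply sq_pos; auto).
    assert (0 < t*t) by nra. clear Hd.
    assert (0 < (c1*c1+c2*c2)*(t*t)) by (apply Rmult_lt_0_compat; nra).
    pose proof (sqnn (c1 * z1 - c2 * z2 + d1)); pose proof (sqnn (c1 * z2 + c2 * z1 + d2)); lra.
  - assert (0 < c1 * c1) by (apply sq_pos; auto).
    assert (0 < t*t) by nra. clear Hd.
    assert (0 < (c1*c1+c2*c2)*(t*t)) by (apply Rmult_lt_0_compat; nra).
    pose proof (sqnn (c1 * z1 - c2 * z2 + d1)); pose proof (sqnn (c1 * z2 + c2 * z1 + d2)); lra.
  - assert (0 < c1 * c1) by (apply sq_pos; auto).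
    assert (0 < t*t) by nra. clear Hd.
    assert (0 < (c1*c1+c2*c2)*(t*t)) by (apply Rmult_lt_0_compat; nra).
    pose proof (sqnn (c1 * z1 - c2 * z2 + d1)); pose proof (sqnn (c1 * z2 + c2 * z1 + d2)); lra.
Qed.

Record Mat := mkM { m11 : C; m12 : C; m21 : C; m22 : C }.
Definition mmul (A B : Mat) : Mat :=
  mkM (Cadd (Cmul (m11 A) (m11 B)) (Cmul (m12 A) (m21 B)))
      (Cadd (Cmul (m11 A) (m12 B)) (Cmul (m12 A) (m22 B)))
      (Cadd (Cmul (m21 A) (m11 B)) (Cmul (m22 A) (m21 B)))
      (Cadd (Cmul (m21 A) (m12 B)) (Cmul (m22 A) (m22 B))).
Definition Pm (M : Mat) := Pq (m11 M) (m12 M) (m21 M) (m22 M).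
Definition Mf (g : Mobius) := mkM (ma g) (mb g) (mc g) (md g).
Definition I2m := mkM (mkC 1 0) (mkC 0 0) (mkC 0 0) (mkC 1 0).
Fixpoint Mprod (f : nat -> Mobius) (n : nat) : Mat :=
  match n with O => I2m | S k => mmul (Mprod f k) (Mf (f (S k))) end.
Definition detM (M : Mat) := detq (m11 M) (m12 M) (m21 M) (m22 M).

Lemma detM_mul A B : detM (mmul A B) = Cmul (detM A) (detM B).
Proof. destruct A, B. unfold detM, mmul; simpl. apply detq_mul. Qed.

Lemma detMf_pos g : 0 < Cnorm2 (detM (Mf g)).
Proof.
  destruct g as [a b c d H]. unfold detM, Mf; simpl. unfold detq.
  destruct (Csub (Cmul a d) (Cmul b c)) as [x y]. unfold Cnorm2; simpl.
  destruct (Req_dec x 0), (Req_dec y 0); try nra. subst. exfalso. apply H. reflexivity.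
Qed.

Lemma detMprod_pos f n : 0 < Cnorm2 (detM (Mprod f n)).
Proof.
  induction n; simpl.
  - unfold detM, detq, I2m, Cnorm2; simpl. lra.
  - rewrite detM_mul, Cnorm2_mul. apply Rmult_lt_0_compat; auto. apply detMf_pos.
Qed.

Lemma Pm_ht_pos M p : 0 < Cnorm2 (detM M) -> 0 < ht p -> 0 < ht (Pm M p).
Proof.
  intros Hd Ht. unfold Pm, Pq; simpl. unfold Rdiv.
  apply Rmult_lt_0_compat; [apply Rmult_lt_0_compat|].
  - unfold Cabs. apply sqrt_lt_R0. exact Hd.
  - exact Ht.
  - apply Rinv_0_lt_compat. eapply Nq_pos'; eauto.
Qed.

Lemma Pm_I p : Pm I2m p = p.
Proof.
  destruct p as [[z1 z2] t]. unfold Pm, Pq, I2m, Cabs, Zq, Nq, detq, Cnorm2, Cadd, Cmul, Cscale, Cconj, Csub; simpl.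
  replace ((1 * 1 - 0 * 0 - (0 * 0 - 0 * 0)) * (1 * 1 - 0 * 0 - (0 * 0 - 0 * 0)) +
     (1 * 0 + 0 * 1 - (0 * 0 + 0 * 0)) * (1 * 0 + 0 * 1 - (0 * 0 + 0 * 0))) with 1 by ring.
  rewrite sqrt_1.
  replace ((0 * z1 - 0 * z2 + 1) * (0 * z1 - 0 * z2 + 1) + (0 * z2 + 0 * z1 + 0) * (0 * z2 + 0 * z1 + 0) + (0 * 0 + 0 * 0) * (t * t)) with 1 by ring.
  f_equal; [f_equal|]; field.
Qed.

Lemma comp_act_Pm f n p : 0 < ht p -> comp_act f n p = Pm (Mprod f n) p.
Proof.
  revert p. induction n; intros p Hp; simpl.
  - symmetry. apply Pm_I.
  - rewrite IHn.
    2:{ rewrite poincare_Pq. change (0 < ht (Pm (Mf (f (S n))) p)). apply Pm_ht_pos; auto. apply detMf_pos. }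
    rewrite poincare_Pq. unfold Pm. destruct (Mprod f n) as [a b c d] eqn:E. simpl.
    apply Pq_comp.
    + eapply Nq_pos'; eauto. apply (detMf_pos (f (S n))).
    + eapply Nq_pos'; eauto.
      pose proof (detMprod_pos f (S n)) as H. simpl in H. rewrite E in H. exact H.
Qed.

Lemma hdist_bound q : 0 < ht q -> exp (- hdist j_pt q) <= 2 * ht q.
Proof.
  intros Hq. destruct q as [z t]. simpl in *. unfold hdist, arcosh, j_pt; simpl.
  set (X := 1 + (Cnorm2 (Csub C0 z) + (1 - t) * (1 - t)) / (2 * 1 * t)).
  assert (HX : / (2 * t) <= X).
  { unfold X. pose proof (Cnorm2_ge0 (Csub C0 z)).
    assert (0 <= (Cnorm2 (Csub C0 z) + (1 - t) * (1 - t)) / (2 * 1 * t) - (/(2*t) - 1)).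
    { replace ((Cnorm2 (Csub C0 z) + (1 - t) * (1 - t)) / (2 * 1 * t) - (/ (2 * t) - 1))
        with ((Cnorm2 (Csub C0 z) + t * t) / (2 * t)) by (field; lra).
      apply Rmult_le_pos; [nra| left; apply Rinv_0_lt_compat; lra]. }
    lra. }
  assert (H2 : 0 < / (2 * t)) by (apply Rinv_0_lt_compat; lra).
  assert (HY : X <= X + sqrt (X * X - 1)) by (pose proof (sqrt_pos (X*X-1)); lra).
  rewrite exp_Ropp, exp_ln by lra.
  replace (2 * t) with (/ / (2 * t)) by (field; lra).
  apply Rinv_le_contravar; lra.
Qed.

Lemma Cabs_ge0 z : 0 <= Cabs z.
Proof. apply sqrt_pos. Qed.
Lemma Cabs_sq z : Cabs z * Cabs z = Cnorm2 z.
Proof. unfold Cabs. apply sqrt_sqrt, Cnorm2_ge0. Qed.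
Lemma Cabs_scale s z : 0 <= s -> Cabs (Cscale s z) = s * Cabs z.
Proof.
  intros Hs. unfold Cabs. replace (Cnorm2 (Cscale s z)) with ((s*s) * Cnorm2 z) by (cdes; ring).
  rewrite sqrt_mult; [| nra | apply Cnorm2_ge0]. rewrite sqrt_square; auto.
Qed.

Lemma Cnorm2_add_ge p q : (Cabs p - Cabs q) * (Cabs p - Cabs q) <= Cnorm2 (Cadd p q).
Proof.
  pose proof (Cabs_sq p). pose proof (Cabs_sq q). pose proof (Cabs_ge0 p). pose proof (Cabs_ge0 q).
  assert (E : Cnorm2 (Cadd p q) = Cnorm2 p + Cnorm2 q + 2 * (re p * re q + im p * im q)) by (cdes; ring).
  assert (CS : (re p * re q + im p * im q) * (re p * re q + im p * im q) <= (Cabs p * Cabs q) * (Cabs p * Cabs q)).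
  { replace ((Cabs p * Cabs q) * (Cabs p * Cabs q)) with (Cnorm2 p * Cnorm2 q) by nra.
    unfold Cnorm2. pose proof (sqnn (re p * im q - im p * re q)). nra. }
  assert (- (Cabs p * Cabs q) <= re p * re q + im p * im q).
  { assert (0 <= Cabs p * Cabs q) by nra. nra. }
  nra.
Qed.

Lemma step_ineq (delta K m Dl Dp : R) (c d v : C) :
  0 < delta -> delta < 1 -> 0 < K -> 0 < m -> 0 < Dl -> Dl < delta * m -> Cabs v + Dl <= m ->
  Cnorm2 c < Cnorm2 d ->
  m * Dp = Cnorm2 (Cadd (Cscale m d) (Cmul c v)) - Dl * Dl * Cnorm2 c ->
  0 < Dp /\
  K / (Cnorm2 d + Cnorm2 c) <= 2 / (1 - delta) * (K / (Cnorm2 d - Cnorm2 c) - K * Dl / Dp).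
Proof.
  intros Hd0 Hd1 HK Hm HDl HDd HV Hcd HDp.
  set (X := Cabs d). set (Y := Cabs c). set (V := Cabs v).
  assert (HX2 : X * X = Cnorm2 d) by apply Cabs_sq.
  assert (HY2 : Y * Y = Cnorm2 c) by apply Cabs_sq.
  assert (HX0 : 0 <= X) by apply Cabs_ge0. assert (HY0 : 0 <= Y) by apply Cabs_ge0.
  assert (HV0 : 0 <= V) by apply Cabs_ge0.
  assert (HYX : Y < X) by nra.
  rewrite <- HX2, <- HY2 in *.
  pose proof (Cnorm2_add_ge (Cscale m d) (Cmul c v)) as HP.
  rewrite Cabs_scale in HP by lra. rewrite Cabs_mul in HP. fold X Y V in HP.
  assert (H1 : 0 <= m * (X - Y) + Y * Dl) by nra.
  change (V + Dl <= m) in HV. assert (Y * V <= Y * (m - Dl)) by (apply Rmult_le_compat_l; lra).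
  assert (H2 : m * (X - Y) + Y * Dl <= m * X - Y * V) by lra.
  assert (H3 : (m * (X - Y) + Y * Dl) * (m * (X - Y) + Y * Dl) <= Cnorm2 (Cadd (Cscale m d) (Cmul c v))) by nra.
  set (L := (X - Y) * (m * (X - Y) + 2 * Y * Dl)).
  assert (HL0 : 0 < L) by (unfold L; apply Rmult_lt_0_compat; nra).
  assert (HLD : L <= Dp).
  { apply (Rmult_le_reg_l m); auto. unfold L. nra. }
  assert (HDp0 : 0 < Dp) by lra.
  split; auto.
  assert (E1 : K * Dl / Dp <= K * Dl / L).
  { unfold Rdiv. apply Rmult_le_compat_l; [nra|]. apply Rinv_le_contravar; auto. }
  assert (E2 : K / (X * X - Y * Y) - K * Dl / L = K * (m - Dl) / ((X + Y) * (m * (X - Y) + 2 * Y * Dl))).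
  { unfold L. field. split; nra. }
  assert (E3 : K * (1 - delta) / (2 * (X * X + Y * Y)) <= K * (m - Dl) / ((X + Y) * (m * (X - Y) + 2 * Y * Dl))).
  { assert (0 < (X + Y) * (m * (X - Y) + 2 * Y * Dl)) by (apply Rmult_lt_0_compat; nra).
    assert (0 < X * X + Y * Y) by nra.
    unfold Rdiv. apply (Rmult_le_reg_r (2 * (X * X + Y * Y) * ((X + Y) * (m * (X - Y) + 2 * Y * Dl)))).
    { apply Rmult_lt_0_compat; lra. }
    replace (K * (1 - delta) * / (2 * (X * X + Y * Y)) * (2 * (X * X + Y * Y) * ((X + Y) * (m * (X - Y) + 2 * Y * Dl))))
      with (K * (1 - delta) * ((X + Y) * (m * (X - Y) + 2 * Y * Dl))) by (field; repeat split; nra).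
    replace (K * (m - Dl) * / ((X + Y) * (m * (X - Y) + 2 * Y * Dl)) * (2 * (X * X + Y * Y) * ((X + Y) * (m * (X - Y) + 2 * Y * Dl))))
      with (K * (m - Dl) * (2 * (X * X + Y * Y))) by (field; repeat split; nra).
    assert (0 <= (X + Y) * (2 * Y * (m - Dl))) by (apply Rmult_le_pos; [lra| apply Rmult_le_pos; lra]).
    assert (A1 : (X + Y) * (m * (X - Y) + 2 * Y * Dl) <= m * (X + Y) * (X + Y)) by lra.
    assert (A2 : (X + Y) * (X + Y) <= 2 * (X * X + Y * Y)) by nra.
    assert (A3 : (1 - delta) * m <= m - Dl) by nra.
    assert (A4 : 0 <= 1 - delta) by lra.
    assert (K * (1 - delta) * ((X + Y) * (m * (X - Y) + 2 * Y * Dl)) <= K * (1 - delta) * (m * (X + Y) * (X + Y))).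
    { apply Rmult_le_compat_l; nra. }
    assert (K * (1 - delta) * (m * (X + Y) * (X + Y)) <= K * (m - Dl) * (2 * (X * X + Y * Y))).
    { replace (K * (1 - delta) * (m * (X + Y) * (X + Y))) with (K * ((1 - delta) * m) * ((X + Y) * (X + Y))) by ring.
      apply Rmult_le_compat; [apply Rmult_le_pos; nra | nra | apply Rmult_le_compat_l; lra | lra]. }
    lra. }
  assert (E4 : K / (X * X + Y * Y) = 2 / (1 - delta) * (K * (1 - delta) / (2 * (X * X + Y * Y)))).
  { field. split; nra. }
  rewrite E4. apply Rmult_le_compat_l.
  { apply Rlt_le. unfold Rdiv. apply Rmult_lt_0_compat; [lra| apply Rinv_0_lt_compat; lra]. }
  lra.
Qed.

Definition vv (al be ga ep : C) := Csub (Cmul be (Cconj ep)) (Cmul al (Cconj ga)).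
Definition mm (ga ep : C) := Cnorm2 ep - Cnorm2 ga.
Definition dt (al be ga ep : C) := Csub (Cmul al ep) (Cmul be ga).

Lemma idL al be ga ep : Cnorm2 (vv al be ga ep) - Cnorm2 (dt al be ga ep) = (Cnorm2 be - Cnorm2 al) * mm ga ep.
Proof. unfold vv, mm, dt. cdes. ring. Qed.
Lemma idG al be ga ep y : Cnorm2 (Csub al (Cmul ga y)) - Cnorm2 (Csub (Cmul ep y) be) =
  - mm ga ep * Cnorm2 y + 2 * (re y * re (vv al be ga ep) + im y * im (vv al be ga ep)) + Cnorm2 al - Cnorm2 be.
Proof. unfold vv, mm, dt. cdes. ring. Qed.
Lemma idmG al be ga ep y : mm ga ep * (Cnorm2 (Csub al (Cmul ga y)) - Cnorm2 (Csub (Cmul ep y) be)) =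
  Cnorm2 (dt al be ga ep) - Cnorm2 (Csub (Cscale (mm ga ep) y) (vv al be ga ep)).
Proof. unfold vv, mm, dt. cdes. ring. Qed.
Lemma idH al be ga ep c d : mm ga ep * (Cnorm2 (Cadd (Cmul c be) (Cmul d ep)) - Cnorm2 (Cadd (Cmul c al) (Cmul d ga))) =
  Cnorm2 (Cadd (Cscale (mm ga ep) d) (Cmul c (vv al be ga ep))) - Cnorm2 (dt al be ga ep) * Cnorm2 c.
Proof. unfold vv, mm, dt. cdes. ring. Qed.
Lemma Cabs_lt1 z : Cnorm2 z < 1 -> Cabs z < 1.
Proof. intros H. unfold Cabs. rewrite <- sqrt_1. apply sqrt_lt_1_alt. split; [apply Cnorm2_ge0|auto]. Qed.
Lemma Cabs_lt1_inv z : Cabs z < 1 -> Cnorm2 z < 1.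
Proof. intros H. rewrite <- Cabs_sq. pose proof (Cabs_ge0 z). nra. Qed.
Lemma re_le_Cabs z : Rabs (re z) <= Cabs z.
Proof.
  pose proof (Cabs_sq z). pose proof (Cabs_ge0 z).
  assert (re z * re z <= Cabs z * Cabs z) by (rewrite H; unfold Cnorm2; nra).
  apply Rabs_le. split; nra.
Qed.
Lemma Cnorm2_pos_neq z : 0 < Cnorm2 z -> z <> C0.
Proof. intros H E. subst. unfold Cnorm2, C0 in H; simpl in H. lra. Qed.

Lemma sup_le (D K : R) : 0 < D -> (forall r, 0 <= r < D -> r < K) -> D <= K.
Proof.
  intros HD H. destruct (Rle_lt_dec D K) as [h|h]; auto. exfalso.
  destruct (Rle_lt_dec K 0) as [h2|h2].
  - specialize (H 0). lra.
  - specialize (H K). lra.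
Qed.

Lemma preimage (g : Mobius) (y : C) :
  Cnorm2 (Csub (Cmul (md g) y) (mb g)) < Cnorm2 (Csub (ma g) (Cmul (mc g) y)) ->
  exists z, in_disc z /\ mob_den g z <> C0 /\ y = mob_apply g z.
Proof.
  destruct g as [al be ga ep Hdet]. simpl. intros Hlt.
  set (w := Csub al (Cmul ga y)) in *.
  set (u := Csub (Cmul ep y) be) in *.
  assert (HW : 0 < Cnorm2 w) by (pose proof (Cnorm2_ge0 u); lra).
  set (z := Cscale (/ Cnorm2 w) (Cmul u (Cconj w))).
  assert (Hz : Cmul z w = u).
  { unfold z. clearbody u w. destruct u, w. unfold Cnorm2 in *; simpl in *.
    unfold Cmul, Cscale, Cconj; simpl. f_equal; field; lra. }
  assert (Hden : Cmul (Cadd (Cmul ga z) ep) w = Csub (Cmul al ep) (Cmul be ga)).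
  { replace (Cmul (Cadd (Cmul ga z) ep) w) with (Cadd (Cmul ga (Cmul z w)) (Cmul ep w)) by (cdes; f_equal; ring).
    rewrite Hz. unfold u, w. cdes. f_equal; ring. }
  assert (Hdp : 0 < Cnorm2 (Csub (Cmul al ep) (Cmul be ga))).
  { destruct (Csub (Cmul al ep) (Cmul be ga)) as [x1 x2]. unfold Cnorm2; simpl.
    destruct (Req_dec x1 0), (Req_dec x2 0); try nra. subst. exfalso. apply Hdet. reflexivity. }
  assert (HD : 0 < Cnorm2 (Cadd (Cmul ga z) ep)).
  { rewrite <- Hden, Cnorm2_mul in Hdp. pose proof (Cnorm2_ge0 (Cadd (Cmul ga z) ep)).
    destruct H as [H|H]; auto. rewrite <- H in Hdp. lra. }
  assert (Hnum : Cadd (Cmul al z) be = Cmul y (Cadd (Cmul ga z) ep)).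
  { replace (Cadd (Cmul al z) be) with (Cadd (Cmul y (Cadd (Cmul ga z) ep)) (Csub (Cmul z w) u))
      by (unfold u, w; cdes; f_equal; ring).
    rewrite Hz. cdes. f_equal; ring. }
  exists z. split; [|split].
  - unfold in_disc. apply Cabs_lt1.
    assert (Cnorm2 z * Cnorm2 w = Cnorm2 u) by (rewrite <- Cnorm2_mul, Hz; auto).
    apply (Rmult_lt_reg_r (Cnorm2 w)); auto. lra.
  - unfold mob_den; simpl. apply Cnorm2_pos_neq; auto.
  - unfold mob_apply, mob_den; simpl. rewrite Hnum.
    clearbody z. clear - HD. set (D := Cadd (Cmul ga z) ep) in *. clearbody D.
    destruct y, D. unfold Cnorm2 in *; simpl in *. unfold Cmul, Cscale, Cconj; simpl. f_equal; field; lra.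
Qed.

Lemma Cnorm2_scale s w : Cnorm2 (Cscale s w) = s * s * Cnorm2 w.
Proof. cdes. ring. Qed.

Lemma detg_pos g : 0 < Cnorm2 (dt (ma g) (mb g) (mc g) (md g)).
Proof.
  destruct g as [al be ga ep Hdet]. unfold dt; simpl.
  destruct (Csub (Cmul al ep) (Cmul be ga)) as [x1 x2]. unfold Cnorm2; simpl.
  destruct (Req_dec x1 0), (Req_dec x2 0); try nra. subst. exfalso. apply Hdet. reflexivity.
Qed.

Lemma extract (delta : R) (g : Mobius) :
  maps_disc_into_disc g -> image_disc_radius_lt g delta ->
  0 < mm (mc g) (md g) /\
  Cabs (dt (ma g) (mb g) (mc g) (md g)) < delta * mm (mc g) (md g) /\
  Cabs (vv (ma g) (mb g) (mc g) (md g)) + Cabs (dt (ma g) (mb g) (mc g) (md g)) <= mm (mc g) (md g).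
Proof.
  intros Hmap [w0 [r0 [[Hr0 Himg] Hrd]]].
  assert (Img : forall y, Cnorm2 (Csub (Cmul (md g) y) (mb g)) < Cnorm2 (Csub (ma g) (Cmul (mc g) y)) ->
                 Cnorm2 y < 1 /\ Cabs (Csub y w0) < r0).
  { intros y Hy. destruct (preimage g y Hy) as [z [Hz [Hd Hyz]]]. split.
    - apply Cabs_lt1_inv. subst y. apply (Hmap z Hz).
    - apply Himg. exists z. auto. }
  assert (Hdp : 0 < Cnorm2 (dt (ma g) (mb g) (mc g) (md g))) by apply detg_pos.
  set (al := ma g) in *. set (be := mb g) in *. set (ga := mc g) in *. set (ep := md g) in *.
  clearbody al be ga ep. clear Hmap Himg.
  set (m := mm ga ep) in *. set (v := vv al be ga ep) in *. set (Dt := dt al be ga ep) in *.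
  pose proof (idL al be ga ep) as HL. pose proof (idG al be ga ep) as HG. pose proof (idmG al be ga ep) as HmG.
  fold m v Dt in HL, HG, HmG.
  assert (Hm : 0 < m).
  { destruct (Rlt_or_le 0 m) as [h|h]; auto. exfalso.
    destruct h as [h|h].
    - set (lam := 1 + (Cnorm2 be + 1) / (- m)).
      assert (Hlam1 : 1 <= lam).
      { unfold lam. assert (0 <= (Cnorm2 be + 1) / (- m)).
        { apply Rmult_le_pos; [pose proof (Cnorm2_ge0 be); lra| left; apply Rinv_0_lt_compat; lra]. } lra. }
      assert (Hlam2 : - m * lam = - m + Cnorm2 be + 1) by (unfold lam; field; lra).
      pose proof (HG (mkC lam 0)) as G1. pose proof (HG (mkC (- lam) 0)) as G2.
      unfold Cnorm2 at 3 in G1. unfold Cnorm2 at 3 in G2. simpl in G1, G2.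
      pose proof (Cnorm2_ge0 al). pose proof (Cnorm2_ge0 be).
      assert (- m * (lam * lam) >= - m * lam) by nra.
      destruct (Rlt_or_le 0 (Cnorm2 (Csub al (Cmul ga (mkC lam 0))) - Cnorm2 (Csub (Cmul ep (mkC lam 0)) be))) as [p1|p1].
      + destruct (Img (mkC lam 0)) as [A _]; [lra|]. unfold Cnorm2 in A; simpl in A. nra.
      + destruct (Img (mkC (- lam) 0)) as [A _]; [nra|]. unfold Cnorm2 in A; simpl in A. nra.
    - assert (HV : 0 < Cnorm2 v).
      { rewrite h in HL. lra. }
      set (lam := (1 + Cnorm2 be) / Cnorm2 v + 1 + 1 / Cnorm2 v).
      assert (Hl1 : 1 <= lam).
      { unfold lam. assert (0 <= (1 + Cnorm2 be) / Cnorm2 v) by (apply Rmult_le_pos; [pose proof (Cnorm2_ge0 be); lra| left; apply Rinv_0_lt_compat; lra]).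
        assert (0 <= 1 / Cnorm2 v) by (apply Rmult_le_pos; [lra| left; apply Rinv_0_lt_compat; lra]). lra. }
      assert (Hl2 : 1 <= lam * Cnorm2 v).
      { unfold lam. assert (0 <= (1 + Cnorm2 be) / Cnorm2 v) by (apply Rmult_le_pos; [pose proof (Cnorm2_ge0 be); lra| left; apply Rinv_0_lt_compat; lra]).
        replace (((1 + Cnorm2 be) / Cnorm2 v + 1 + 1 / Cnorm2 v) * Cnorm2 v) with (1 + Cnorm2 be + Cnorm2 v + 1) by (field; lra).
        pose proof (Cnorm2_ge0 be). lra. }
      assert (Hl3 : lam * Cnorm2 v = 1 + Cnorm2 be + Cnorm2 v + 1) by (unfold lam; field; lra).
      pose proof (HG (Cscale lam v)) as G1. rewrite h in G1.
      replace (re (Cscale lam v) * re v + im (Cscale lam v) * im v) with (lam * Cnorm2 v) in G1 by (unfold Cnorm2, Cscale; simpl; ring).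
      pose proof (Cnorm2_ge0 al). pose proof (Cnorm2_ge0 be).
      destruct (Img (Cscale lam v)) as [A _]; [lra|].
      replace (Cnorm2 (Cscale lam v)) with (lam * (lam * Cnorm2 v)) in A by (unfold Cnorm2, Cscale; simpl; ring).
      nra. }
  set (Dl := Cabs Dt).
  assert (HDl2 : Dl * Dl = Cnorm2 Dt) by apply Cabs_sq.
  assert (HDl0 : 0 < Dl) by (unfold Dl, Cabs; apply sqrt_lt_R0; auto).
  assert (ImgM : forall y, Cnorm2 (Csub (Cscale m y) v) < Cnorm2 Dt -> Cnorm2 y < 1 /\ Cabs (Csub y w0) < r0).
  { intros y Hy. apply Img. specialize (HmG y). apply (Rmult_lt_reg_l m); auto. lra. }
  split; [auto|split].
  - assert (Dl <= m * r0).
    { apply sup_le; auto. intros rho Hrho.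
      set (y1 := Cscale (/ m) (Cadd v (mkC rho 0))).
      set (y2 := Cscale (/ m) (Cadd v (mkC (- rho) 0))).
      assert (E1 : Cnorm2 (Csub (Cscale m y1) v) = rho * rho).
      { unfold y1. clearbody v. destruct v. unfold Cnorm2, Csub, Cscale, Cadd; simpl. field. lra. }
      assert (E2 : Cnorm2 (Csub (Cscale m y2) v) = rho * rho).
      { unfold y2. clearbody v. destruct v. unfold Cnorm2, Csub, Cscale, Cadd; simpl. field. lra. }
      destruct (ImgM y1) as [_ A1]; [nra|]. destruct (ImgM y2) as [_ A2]; [nra|].
      pose proof (re_le_Cabs (Csub y1 w0)). pose proof (re_le_Cabs (Csub y2 w0)).
      assert (R1 : re (Csub y1 w0) < r0) by (pose proof (Rle_abs (re (Csub y1 w0))); lra).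
      assert (R2 : - re (Csub y2 w0) < r0) by (pose proof (Rle_abs (- re (Csub y2 w0))); rewrite Rabs_Ropp in *; lra).
      assert (E3 : re (Csub y1 w0) - re (Csub y2 w0) = 2 * rho / m).
      { unfold y1, y2, Csub, Cscale, Cadd; simpl. field. lra. }
      assert (2 * rho / m < 2 * r0) by lra.
      assert (2 * rho < 2 * r0 * m).
      { replace (2 * rho) with (2 * rho / m * m) by (field; lra). apply Rmult_lt_compat_r; auto. }
      lra. }
    nra.
  - set (V := Cabs v). assert (HV2 : V * V = Cnorm2 v) by apply Cabs_sq.
    assert (HV0 : 0 <= V) by apply Cabs_ge0.
    cut (Dl <= m - V). { lra. }
    apply sup_le; auto. intros rho Hrho.
    destruct HV0 as [HV0|HV0].
    + set (y := Cscale ((1 + rho / V) / m) v).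
      pose proof Cnorm2_scale as Cn.
      assert (E0 : Csub (Cscale m y) v = Cscale (rho / V) v).
      { unfold y. clearbody v V. destruct v. unfold Csub, Cscale; simpl. f_equal; field; lra. }
      assert (E1 : Cnorm2 (Csub (Cscale m y) v) = rho * rho).
      { rewrite E0, Cn, <- HV2. field. lra. }
      destruct (ImgM y) as [A _]; [nra|].
      replace (Cnorm2 y) with (((V + rho) / m) * ((V + rho) / m)) in A.
      2:{ unfold y. rewrite Cn, <- HV2. field. lra. }
      assert ((V + rho) / m < 1).
      { assert (0 <= (V + rho) / m) by (apply Rmult_le_pos; [lra| left; apply Rinv_0_lt_compat; lra]). nra. }
      assert (V + rho < m).
      { assert (V + rho = (V + rho) / m * m) by (field; lra). nra. }
      lra.
    + assert (Hv0 : re v = 0 /\ im v = 0).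
      { rewrite <- HV0 in HV2. unfold Cnorm2 in HV2. split; nra. }
      set (y := mkC (rho / m) 0).
      assert (E1 : Cnorm2 (Csub (Cscale m y) v) = rho * rho).
      { unfold y. clearbody v. destruct v. simpl in Hv0. destruct Hv0; subst.
        unfold Cnorm2, Csub, Cscale; simpl. field. lra. }
      destruct (ImgM y) as [A _]; [nra|].
      unfold y, Cnorm2 in A; simpl in A.
      assert (rho / m < 1) by nra.
      assert (rho < m).
      { assert (rho = rho / m * m) by (field; lra). nra. }
      lra.
Qed.


Definition Tm (M : Mat) := Cabs (detM M) / (Cnorm2 (m22 M) + Cnorm2 (m21 M)).
Definition Rm (M : Mat) := Cabs (detM M) / (Cnorm2 (m22 M) - Cnorm2 (m21 M)).

Lemma ht_Pm_j M : ht (Pm M j_pt) = Tm M.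
Proof.
  unfold Pm, Pq, Tm, detM; simpl. f_equal; [ring|].
  destruct M as [a b c d]; simpl. unfold Nq. cdes. ring.
Qed.

Lemma main_step (delta : R) (f : nat -> Mobius) n :
  0 < delta -> delta < 1 -> maps_disc_into_disc (f (S n)) -> image_disc_radius_lt (f (S n)) delta ->
  Cnorm2 (m21 (Mprod f n)) < Cnorm2 (m22 (Mprod f n)) ->
  Cnorm2 (m21 (Mprod f (S n))) < Cnorm2 (m22 (Mprod f (S n))) /\
  Tm (Mprod f n) <= 2 / (1 - delta) * (Rm (Mprod f n) - Rm (Mprod f (S n))).
Proof.
  intros Hd0 Hd1 Hmap Himg Hinv.
  destruct (extract delta (f (S n)) Hmap Himg) as [Hm [HDl HV]].
  pose proof (detMprod_pos f n) as HK.
  simpl. unfold Tm, Rm. simpl. rewrite detM_mul, Cabs_mul.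
  destruct (Mprod f n) as [a b c d]. simpl in *. unfold Mf; simpl.
  destruct (f (S n)) as [al be ga ep Hdet]. simpl in *.
  change (detM (mkM al be ga ep)) with (dt al be ga ep).
  pose proof (idH al be ga ep c d) as HH.
  rewrite <- (Cabs_sq (dt al be ga ep)) in HH.
  assert (HK' : 0 < Cabs (detM (mkM a b c d))) by (unfold Cabs; apply sqrt_lt_R0; auto).
  assert (HDl0 : 0 < Cabs (dt al be ga ep)).
  { unfold Cabs. apply sqrt_lt_R0. exact (detg_pos (mkMobius al be ga ep Hdet)). }
  destruct (step_ineq delta (Cabs (detM (mkM a b c d))) (mm ga ep) (Cabs (dt al be ga ep))
     (Cnorm2 (Cadd (Cmul c be) (Cmul d ep)) - Cnorm2 (Cadd (Cmul c al) (Cmul d ga))) c d (vv al be ga ep))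
    as [P1 P2]; auto.
  split; [lra|].
  replace (Cabs (detM {| m11 := a; m12 := b; m21 := c; m22 := d |}) * Cabs (dt al be ga ep) /
    (Cnorm2 (Cadd (Cmul c be) (Cmul d ep)) - Cnorm2 (Cadd (Cmul c al) (Cmul d ga))))
   with (Cabs (detM {| m11 := a; m12 := b; m21 := c; m22 := d |}) * Cabs (dt al be ga ep) /
    (Cnorm2 (Cadd (Cmul c be) (Cmul d ep)) - Cnorm2 (Cadd (Cmul c al) (Cmul d ga)))) by reflexivity.
  exact P2.
Qed.

Theorem theorem1p5 (delta : R) (f : nat -> Mobius) :
  0 < delta -> delta < 1 ->
  (forall n : nat, (1 <= n)%nat ->
     maps_disc_into_disc (f n) /\ image_disc_radius_lt (f n) delta) ->
  rapid_escape (fun n => comp_act f (S n)).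
Proof.
  intros Hd0 Hd1 Hf.
  set (Cst := 2 / (1 - delta)).
  assert (HCst : 0 < Cst) by (unfold Cst, Rdiv; apply Rmult_lt_0_compat; [lra| apply Rinv_0_lt_compat; lra]).
  assert (Inv : forall n, Cnorm2 (m21 (Mprod f n)) < Cnorm2 (m22 (Mprod f n))).
  { induction n.
    - simpl. unfold Cnorm2; simpl. lra.
    - destruct (Hf (S n)) as [A B]; [lia|].
      exact (proj1 (main_step delta f n Hd0 Hd1 A B IHn)). }
  assert (Step : forall n, Tm (Mprod f n) <= Cst * (Rm (Mprod f n) - Rm (Mprod f (S n)))).
  { intros n. destruct (Hf (S n)) as [A B]; [lia|].
    exact (proj2 (main_step delta f n Hd0 Hd1 A B (Inv n))). }
  assert (Rpos : forall n, 0 < Rm (Mprod f n)).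
  { intros n. unfold Rm. unfold Rdiv. apply Rmult_lt_0_compat.
    - unfold Cabs. apply sqrt_lt_R0. apply detMprod_pos.
    - apply Rinv_0_lt_compat. pose proof (Inv n). lra. }
  set (s := fun n => exp (- hdist j_pt (comp_act f (S n) j_pt))).
  assert (Hs : forall n, s n <= 2 * Tm (Mprod f (S n))).
  { intros n. unfold s. rewrite comp_act_Pm by (simpl; lra). rewrite <- ht_Pm_j.
    apply hdist_bound. apply Pm_ht_pos; [apply detMprod_pos| simpl; lra]. }
  assert (Hs0 : forall n, 0 <= s n) by (intros; unfold s; left; apply exp_pos).
  assert (Hsum : forall N, sum_f_R0 s N <= 2 * Cst * (Rm (Mprod f 1) - Rm (Mprod f (S (S N))))).
  { induction N; simpl sum_f_R0.
    - pose proof (Hs 0%nat). pose proof (Step 1%nat). lra.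
    - pose proof (Hs (S N)). pose proof (Step (S (S N))). lra. }
  assert (Hcv : {l | Un_cv (sum_f_R0 s) l}).
  { apply growing_cv.
    - intros n. simpl. pose proof (Hs0 (S n)). lra.
    - exists (2 * Cst * Rm (Mprod f 1)). intros x [i ->].
      pose proof (Hsum i). pose proof (Rpos (S (S i))).
      assert (0 <= 2 * Cst * Rm (Mprod f (S (S i)))) by (pose proof HCst; nra). lra. }
  destruct Hcv as [l Hl].
  split.
  - intros M.
    destruct (Hl (exp (- M) / 2)) as [N HN].
    { apply Rlt_gt. unfold Rdiv. apply Rmult_lt_0_compat; [apply exp_pos| lra]. }
    exists (S N). intros n Hn. destruct n as [|k]; [lia|].
    pose proof (HN k ltac:(lia)) as H1. pose proof (HN (S k) ltac:(lia)) as H2.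
    unfold Rdist in H1, H2. simpl sum_f_R0 in H2.
    apply Rabs_def2 in H1. apply Rabs_def2 in H2.
    assert (s (S k) < exp (- M)) by lra.
    unfold s in H. apply exp_lt_inv in H. lra.
  - exists l. exact Hl.
Qed.
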